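(* Let $w$ be a good word with word polynomial $p_w$ and let $z\in\mathbb{C}\setminus\{0\}$ be such that $\Gamma_z$ is discrete. Then $\Gamma_{p_w(z)}$ is also discrete.
   Context: $\Gamma_z=\langle \pm\begin{pmatrix}1&1\\0&1\end{pmatrix},\pm\begin{pmatrix}1&0\\ z&1\end{pmatrix}\rangle\subset PSL(2,\mathbb{C})$. For $x,y\in PSL(2,\mathbb{C})$, $\gamma(x,y)=\operatorname{tr}[x,y]-2$. A good word is a reduced word $w=a^{m_1}ba^{m_2}b\cdots ba^{m_n}$ in $\langle a,b\mid b^2=1\rangle$ with $n\ge3$ and $m_i\ne0$ for $2\le i\le n-1$; its word polynomial $p_w\in\mathbb{Z}[z]$ is the unique polynomial such that for every parabolic $f$ and every order-two elliptic $\phi$ in $PSL(2,\mathbb{C})$, $\gamma(f,w(f,\phi))=p_w(\gamma(f,\phi))$, where $w(f,\phi)$ substitutes $a=f$, $b=\phi$. *)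

(* Defs.v *)
From mathcomp Require Import all_boot all_order all_algebra.
From mathcomp Require Import reals.
From mathcomp.real_closed Require Import complex.
Set Implicit Arguments. Unset Strict Implicit. Unset Printing Implicit Defensive.
Import Order.TTheory GRing.Theory Num.Theory.
Local Open Scope ring_scope.

Section Defs.
Variable R : realType.
Local Notation C := R[i].

Definition mx2 (a b c d : C) : 'M[C]_2 :=
  \matrix_(i < 2, j < 2)
    if (i : nat) == 0%N then (if (j : nat) == 0%N then a else b)
    else (if (j : nat) == 0%N then c else d).

Definition gamma (x y : 'M[C]_2) : C :=
  \tr (x *m y *m invmx x *m invmx y) - 2.

(* Elements of SL(2,C) representing parabolic elements of PSL(2,C). *)
Definition parabolic (f : 'M[C]_2) : Prop :=
  \det f = 1 /\ (\tr f = 2 \/ \tr f = - 2) /\ f <> 1 /\ f <> - 1.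

(* Elements of SL(2,C) representing elements of order two in PSL(2,C)
   (these are exactly the order-two elliptic elements). *)
Definition order_two_elliptic (phi : 'M[C]_2) : Prop :=
  \det phi = 1 /\ (phi * phi = 1 \/ phi * phi = - 1) /\ phi <> 1 /\ phi <> - 1.

(* A word a^{m_1} b a^{m_2} b ... b a^{m_n} is encoded by its exponent list
   [:: m_1; ...; m_n].  Evaluation at a = f, b = phi. *)
Fixpoint word_eval (f phi : 'M[C]_2) (ms : seq int) : 'M[C]_2 :=
  match ms with
  | [::] => 1
  | [:: m] => f ^ m
  | m :: ms' => f ^ m * phi * word_eval f phi ms'
  end.

(* Good word: n >= 3 and m_i <> 0 for 2 <= i <= n-1 (1-based). *)
Definition good_word (ms : seq int) : Prop :=
  (3 <= size ms)%N /\
  (forall i : nat, (0 < i)%N -> (i < (size ms).-1)%N -> nth 0 ms i <> 0).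

Definition is_word_poly (ms : seq int) (p : {poly C}) : Prop :=
  forall f phi : 'M[C]_2, parabolic f -> order_two_elliptic phi ->
    gamma f (word_eval f phi ms) = p.[gamma f phi].

(* Preimage in SL(2,C) of Gamma_z = < ±(1 1;0 1), ±(1 0;z 1) >. *)
Inductive in_Gamma (z : C) : 'M[C]_2 -> Prop :=
  | Gamma_one : in_Gamma z 1
  | Gamma_negone : in_Gamma z (- 1)
  | Gamma_A : in_Gamma z (mx2 1 1 0 1)
  | Gamma_B : in_Gamma z (mx2 1 0 z 1)
  | Gamma_inv g : in_Gamma z g -> in_Gamma z (invmx g)
  | Gamma_mul g h : in_Gamma z g -> in_Gamma z h -> in_Gamma z (g * h).

(* Gamma_z is discrete in PSL(2,C): every element ±g is isolated for the
   quotient metric d(±g, ±h) = min(|g - h|, |g + h|) (entrywise max-norm). *)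
Definition discrete_Gamma (z : C) : Prop :=
  forall g, in_Gamma z g ->
    exists eps : R, 0 < eps /\
      forall h, in_Gamma z h -> h <> g -> h <> - g ->
        (exists i j, ((eps%:C)%C <= `|h i j - g i j|)) /\
        (exists i j, ((eps%:C)%C <= `|h i j + g i j|)).
End Defs.

(* Main.v *)
Set Warnings "-notation-overridden,-ambiguous-paths".
Require Import Defs.
From mathcomp Require Import all_boot all_order all_algebra.
From mathcomp Require Import reals.
From mathcomp.real_closed Require Import complex.
From mathcomp Require Import ring lra.
Import Order.TTheory GRing.Theory Num.Theory.
Local Open Scope ring_scope.

Section Tk.
Variable R : realType.
Local Notation C := R[i].
Local Notation M2 := ('M[C]_2).

Lemma mx2E (a b c d : C) i j : mx2 a b c d i j =
  if (i : nat) == 0%N then (if (j : nat) == 0%N then a else b)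
  else (if (j : nat) == 0%N then c else d).
Proof. by rewrite mxE. Qed.

Lemma mx2_eta (X : M2) : X = mx2 (X 0 0) (X 0 1) (X 1 0) (X 1 1).
Proof.
apply/matrixP => i j; rewrite mx2E.
by case: i => [[|[|]]] //= ? ; case: j => [[|[|]]] //= ?; congr (X _ _); apply/val_inj.
Qed.

Lemma mx2_mul (a b c d e f g h : C) :
  mx2 a b c d * mx2 e f g h = mx2 (a*e+b*g) (a*f+b*h) (c*e+d*g) (c*f+d*h).
Proof.
apply/matrixP => i j; rewrite -mulmxE !mxE !big_ord_recl big_ord0 !mxE /=.
by case: i => [[|[|]]] //= ? ; case: j => [[|[|]]] //= ?; rewrite addr0.
Qed.

Lemma mx2_one : (1 : M2) = mx2 1 0 0 1.
Proof.
apply/matrixP => i j; rewrite !mxE.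
by case: i => [[|[|]]] //= ? ; case: j => [[|[|]]] //= ?.
Qed.

Lemma mx2_opp (a b c d : C) : - mx2 a b c d = mx2 (-a) (-b) (-c) (-d).
Proof.
apply/matrixP => i j; rewrite !mxE.
by case: i => [[|[|]]] //= ? ; case: j => [[|[|]]] //= ?.
Qed.

Lemma mx2_add (a b c d e f g h : C) :
  mx2 a b c d + mx2 e f g h = mx2 (a+e) (b+f) (c+g) (d+h).
Proof.
apply/matrixP => i j; rewrite !mxE.
by case: i => [[|[|]]] //= ? ; case: j => [[|[|]]] //= ?.
Qed.

Lemma mx2_det (a b c d : C) : \det (mx2 a b c d) = a * d - b * c.
Proof.
rewrite (expand_det_row _ 0) !big_ord_recl big_ord0 /cofactor !mxE /=.
rewrite !det_mx11 !mxE /=.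
rewrite !expr0 !expr1 /=; ring.
Qed.

Lemma mx2_tr (a b c d : C) : \tr (mx2 a b c d) = a + d.
Proof. by rewrite /mxtrace !big_ord_recl big_ord0 !mxE /= addr0. Qed.

Lemma mx2_inj (a b c d a' b' c' d' : C) : mx2 a b c d = mx2 a' b' c' d' ->
  [/\ a = a', b = b', c = c' & d = d'].
Proof.
move=> E; split.
- by have := congr1 (fun X : M2 => X 0 0) E; rewrite !mxE.
- by have := congr1 (fun X : M2 => X 0 1) E; rewrite !mxE.
- by have := congr1 (fun X : M2 => X 1 0) E; rewrite !mxE.
- by have := congr1 (fun X : M2 => X 1 1) E; rewrite !mxE.
Qed.


Lemma invE (X : M2) : X^-1 = invmx X.
Proof. by []. Qed.

Lemma invmx_uniq (X Y : M2) : X * Y = 1 -> invmx X = Y.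
Proof.
move=> XY; have [uX _] := mulmx1_unit (esym (esym XY : _ = X *m Y)).
by rewrite -[invmx X]mulmx1 -[1%:M]/(1 : M2) -XY mulmxE mulrA -mulmxE mulVmx // mulmxE mul1r.
Qed.

Lemma mx2_inv (a b c d : C) : a * d - b * c = 1 ->
  invmx (mx2 a b c d) = mx2 d (-b) (-c) a.
Proof.
move=> H; apply: invmx_uniq; rewrite mx2_mul mx2_one.
congr mx2; (try rewrite -H); ring.
Qed.

Lemma det1_unit (X : M2) : \det X = 1 -> X \in unitmx.
Proof. by move=> H; rewrite unitmxE H unitr1. Qed.

Lemma Gamma_det (z : C) (g : M2) : in_Gamma z g -> \det g = 1.
Proof.
elim=> {g}.
- by rewrite det1.
- by rewrite -scaleN1r detZ det1 mulr1 expr2 mulrNN mulr1.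
- by rewrite mx2_det; ring.
- by rewrite mx2_det; ring.
- by move=> g _ H; rewrite det_inv H invr1.
- by move=> g h _ Hg _ Hh; rewrite -mulmxE det_mulmx Hg Hh mulr1.
Qed.

Lemma Gamma_unit (z : C) (g : M2) : in_Gamma z g -> g \in unitmx.
Proof. by move/Gamma_det/det1_unit. Qed.

Lemma Gamma_expz (z : C) (g : M2) (m : int) : in_Gamma z g -> in_Gamma z (g ^ m).
Proof.
move=> Hg.
have Hn : forall n, in_Gamma z (g ^+ n).
  elim=> [|n IH]; first by rewrite expr0; constructor.
  by rewrite exprS; constructor.
case: m => n; first by apply: Hn.
by rewrite NegzE -invr_expz invE; constructor; apply: Hn.
Qed.


Local Notation A := (mx2 1 1 0 1 : M2).

Lemma conj_Gamma (y w : C) (M N : M2) : M * N = 1 -> N * M = 1 ->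
  in_Gamma w (M * A * N) -> in_Gamma w (M * mx2 1 0 y 1 * N) ->
  forall h, in_Gamma y h -> in_Gamma w (M * h * N).
Proof.
move=> MN NM HA HB h Hh; elim: h / Hh.
- by rewrite mulr1 MN; constructor.
- by rewrite mulrN1 mulNr MN; constructor.
- exact: HA.
- exact: HB.
- move=> g Hg IH.
  have -> : M * invmx g * N = invmx (M * g * N).
    apply/esym/invmx_uniq.
    rewrite -!mulrA (mulrA N) NM mul1r (mulrA g) -invE mulrV ?mul1r //.
    exact: Gamma_unit Hg.
  by constructor.
- move=> g k _ Hg _ Hk.
  have -> : M * (g * k) * N = (M * g * N) * (M * k * N).
    by rewrite -!mulrA (mulrA N) NM mul1r.
  by constructor.
Qed.

Lemma gammaA (g : M2) : \det g = 1 -> gamma A g = (g 1 0) ^+ 2.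
Proof.
rewrite /gamma (mx2_eta g) mx2_det !mxE /=.
set a := g 0 0; set b := g 0 1; set c := g 1 0; set d := g 1 1 => H.
rewrite !mx2_inv ?H; last by ring.
rewrite !mulmxE !mx2_mul mx2_tr.
transitivity (c ^+ 2 + 2 * (a * d - b * c) - 2); first by ring.
  by rewrite H; ring.
by [].

Qed.

Definition nrm (x : C) : R := Num.sqrt (complex.Re x ^+ 2 + complex.Im x ^+ 2).

Lemma normE (x : C) : `|x| = ((nrm x)%:C)%C.
Proof. exact: normc_def. Qed.

Lemma nrm_ge0 x : 0 <= nrm x.
Proof. exact: sqrtr_ge0. Qed.

Lemma nrm_add x y : nrm (x + y) <= nrm x + nrm y.
Proof. by have := ler_normD x y; rewrite !normE -rmorphD lecR. Qed.

Lemma nrm_mul x y : nrm (x * y) = nrm x * nrm y.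
Proof. by have := normrM x y; rewrite !normE -rmorphM; apply: complexI. Qed.

Lemma nrm_opp x : nrm (- x) = nrm x.
Proof. by have := normrN x; rewrite !normE; apply: complexI. Qed.

Lemma nrm_sub x y : nrm (x - y) <= nrm x + nrm y.
Proof. by rewrite -(nrm_opp y) nrm_add. Qed.


Lemma conj_trans_eq (t : C) (X : M2) : mx2 1 (-t) 0 1 * X * mx2 1 t 0 1 =
  mx2 (X 0 0 - t * X 1 0) (t * X 0 0 - t * t * X 1 0 + X 0 1 - t * X 1 1)
      (X 1 0) (t * X 1 0 + X 1 1).
Proof. by rewrite {1}(mx2_eta X) !mx2_mul; congr mx2; ring. Qed.

Lemma conj_bound (t : C) (X : M2) (e : R) :
  (forall i j, nrm (X i j) <= e) ->
  forall i j, nrm ((mx2 1 (-t) 0 1 * X * mx2 1 t 0 1) i j) <= (1 + nrm t) ^+ 2 * e.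
Proof.
move=> H i j; rewrite conj_trans_eq mx2E.
have h00 := H 0 0; have h01 := H 0 1; have h10 := H 1 0; have h11 := H 1 1.
have e0 : 0 <= e by apply: le_trans (h00); apply: nrm_ge0.
have tp := nrm_ge0 t.
set x := X 0 0 in h00 *; set y := X 0 1 in h01 *; set u := X 1 0 in h10 *;
set v := X 1 1 in h11 *.
have nx := nrm_ge0 x; have ny := nrm_ge0 y; have nu := nrm_ge0 u;
have nv := nrm_ge0 v.
have Ht x' : nrm x' <= e -> nrm (t * x') <= nrm t * e.
  by move=> hx; rewrite nrm_mul; apply: ler_wpM2l.
have Htt x' : nrm x' <= e -> nrm (t * t * x') <= nrm t * nrm t * e.
  move=> hx; rewrite !nrm_mul -!mulrA; apply: ler_wpM2l => //.
  by apply: ler_wpM2l.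
case: i => [[|[|]]] //= _; case: j => [[|[|]]] //= _.
- apply: le_trans (nrm_sub _ _) _.
  have := Ht _ h10; nra.
- apply: le_trans (nrm_sub _ _) _.
  apply: le_trans (lerD (nrm_add _ _) (lexx _)) _.
  apply: le_trans (lerD (lerD (nrm_sub _ _) (lexx _)) (lexx _)) _.
  have := Ht _ h00; have := Htt _ h10; have := Ht _ h11; nra.
- nra.
- apply: le_trans (nrm_add _ _) _.
  have := Ht _ h10; nra.
Qed.


Lemma mxsubE (P Q : M2) i j : (P - Q) i j = P i j - Q i j.
Proof. by rewrite !mxE. Qed.

Lemma mxaddE (P Q : M2) i j : (P + Q) i j = P i j + Q i j.
Proof. by rewrite !mxE. Qed.

Lemma disc_transfer (y w t : C) :
  (forall h, in_Gamma y h -> in_Gamma w (mx2 1 (-t) 0 1 * h * mx2 1 t 0 1)) ->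
  discrete_Gamma w -> discrete_Gamma y.
Proof.
set M := mx2 1 (-t) 0 1; set N := mx2 1 t 0 1.
have NM : N * M = 1 by rewrite mx2_mul mx2_one; congr mx2; ring.
move=> Hc Hd g Hg.
have [eps0 [e0 Heps]] := Hd _ (Hc _ Hg).
set K := (1 + nrm t) ^+ 2.
have K1 : 1 <= K by have := nrm_ge0 t; rewrite /K; nra.
set eps := eps0 / (2 * K).
have epsp : 0 < eps by rewrite divr_gt0 // mulr_gt0 // (lt_le_trans ltr01 K1).
have Keps : K * eps = eps0 / 2.
  rewrite /eps; field.
  by apply/eqP => K0; move: K1; rewrite K0 ler10.
have inj : forall X Y, M * X * N = M * Y * N -> X = Y.
  move=> X Y E; have := congr1 (fun Z => N * Z * M) E.
  by rewrite /= !mulrA NM !mul1r -!mulrA NM !mulr1.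
have conv : forall X : M2, (exists i j, ((eps0%:C)%C <= `|(M * X * N) i j|)) ->
    exists i j, ((eps%:C)%C <= `|X i j|).
  move=> X [i [j H]].
  case: (boolP [exists i, exists j, eps <= nrm (X i j)]).
    by move=> /existsP [i' /existsP [j' Hij]]; exists i', j'; rewrite normE lecR.
  rewrite negb_exists => /forallP Hn.
  have Hb : forall i j, nrm (X i j) <= eps.
    move=> i' j'; have := Hn i'; rewrite negb_exists => /forallP /(_ j').
    by rewrite -ltNge => /ltW.
  have := @conj_bound t X eps Hb i j; move: H; rewrite normE lecR -/M -/N -/K Keps => H1 H2.
  have : eps0 <= eps0 / 2 by apply: le_trans H2.
  move: e0; nra.
exists eps; split => // h Hh hg hng.
have n1 : M * h * N <> M * g * N by move/inj.
have n2 : M * h * N <> - (M * g * N).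
  by rewrite -mulNr -mulrN => /inj.
have [[i [j H1]] [i' [j' H2]]] := Heps _ (Hc _ Hh) n1 n2.
split.
- have /conv [a [b Hab]] : exists i j, ((eps0%:C)%C <= `|(M * (h - g) * N) i j|).
    by exists i, j; rewrite mulrBr mulrBl mxsubE.
  by exists a, b; rewrite -mxsubE.
- have /conv [a [b Hab]] : exists i j, ((eps0%:C)%C <= `|(M * (h + g) * N) i j|).
    by exists i', j'; rewrite mulrDr mulrDl mxaddE.
  by exists a, b; rewrite -mxaddE.
Qed.


Lemma eq_mod (x y k u : C) : u = 1 -> x - y = k * (u - 1) -> x = y.
Proof. by move=> -> /eqP; rewrite subrr mulr0 subr_eq0 => /eqP. Qed.

Definition Qn (v : C) (g : M2) : Prop :=
  \det g = 1 /\ forall h, in_Gamma v h -> in_Gamma v (g * h * invmx g).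

Lemma Qn_mul (v : C) (g1 g2 : M2) : Qn v g1 -> Qn v g2 -> Qn v (g1 * g2).
Proof.
move=> [d1 H1] [d2 H2]; split.
  by rewrite -mulmxE det_mulmx d1 d2 mulr1.
move=> h Hh.
have -> : invmx (g1 * g2) = invmx g2 * invmx g1.
  by rewrite -!invE invrM // ?invE; apply: det1_unit.
rewrite !mulrA.
have -> : g1 * g2 * h * invmx g2 * invmx g1 = g1 * (g2 * h * invmx g2) * invmx g1.
  by rewrite !mulrA.
by apply: H1; apply: H2.
Qed.

Lemma Qn_Gamma (v : C) (g : M2) : in_Gamma v g -> Qn v g.
Proof.
move=> Hg; split; first exact: Gamma_det Hg.
by move=> h Hh; do 2 constructor => //; constructor.
Qed.

Lemma Qn_one (v : C) : Qn v 1.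
Proof. by apply: Qn_Gamma; constructor. Qed.


Lemma Qn_word (v : C) (phi : M2) ms : Qn v phi -> Qn v (word_eval A phi ms).
Proof.
move=> Hp; elim: ms => [|m [|m' ms] IH] /=.
- exact: Qn_one.
- by apply: Qn_Gamma; apply: Gamma_expz; constructor.
- apply: Qn_mul IH; apply: Qn_mul Hp.
  by apply: Qn_Gamma; apply: Gamma_expz; constructor.
Qed.

Lemma two_neq0 : (2 : C) != 0.
Proof. by rewrite pnatr_eq0. Qed.

Lemma phi_props (c : C) : c != 0 ->
  order_two_elliptic (mx2 0 (- c^-1) c 0) /\ Qn (- c ^+ 2) (mx2 0 (- c^-1) c 0)
  /\ gamma A (mx2 0 (- c^-1) c 0) = c ^+ 2.
Proof.
move=> c0.
have dt : \det (mx2 0 (- c^-1) c 0) = 1 by rewrite mx2_det; field.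
split; [|split].
- split => //; split; last split.
  + by right; rewrite mx2_mul mx2_one mx2_opp; congr mx2; field.
  + by rewrite mx2_one => /mx2_inj [_ _ /eqP]; rewrite (negPf c0).
  + by rewrite mx2_one mx2_opp oppr0 => /mx2_inj [_ _ /eqP]; rewrite (negPf c0).
- split => // h Hh.
  have Hi : invmx (mx2 0 (- c^-1) c 0) = mx2 0 (c^-1) (- c) 0.
    by rewrite mx2_inv ?opprK // -dt mx2_det.
  rewrite Hi; move: h Hh; apply: conj_Gamma.
  + by rewrite mx2_mul mx2_one; congr mx2; field.
  + by rewrite mx2_mul mx2_one; congr mx2; field.
  + have -> : mx2 0 (- c^-1) c 0 * A * mx2 0 c^-1 (- c) 0 = mx2 1 0 (- c ^+ 2) 1.
      by rewrite !mx2_mul; congr mx2; field.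
    by constructor.
  + have -> : mx2 0 (- c^-1) c 0 * mx2 1 0 (- c ^+ 2) 1 * mx2 0 c^-1 (- c) 0 = A.
      by rewrite !mx2_mul; congr mx2; field.
    by constructor.
- by rewrite gammaA // mxE.
Qed.


Lemma A_parabolic : parabolic A.
Proof.
split; first by rewrite mx2_det; ring.
split; first by left; rewrite mx2_tr.
split.
- by rewrite mx2_one => /mx2_inj [_ /eqP]; rewrite oner_eq0.
- rewrite mx2_one mx2_opp => /mx2_inj [/eqP]; rewrite -subr_eq0 opprK.
  by rewrite (negPf two_neq0).
Qed.

Local Notation D := (mx2 1 0 0 (-1) : M2).

Lemma D_conj (z : C) h : in_Gamma (- z) h -> in_Gamma z (D * h * D).
Proof.
move: h; apply: conj_Gamma.
- by rewrite mx2_mul mx2_one; congr mx2; ring.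
- by rewrite mx2_mul mx2_one; congr mx2; ring.
- have -> : D * A * D = invmx A.
    by rewrite mx2_inv ?mx2_mul; [congr mx2; ring | ring].
  by do 2 constructor.
- have -> : D * mx2 1 0 (- z) 1 * D = mx2 1 0 z 1.
    by rewrite !mx2_mul; congr mx2; ring.
  by constructor.
Qed.

Lemma trans_props (t : C) : mx2 1 (-t) 0 1 * mx2 1 t 0 1 = 1 /\
  mx2 1 t 0 1 * mx2 1 (-t) 0 1 = 1 /\ mx2 1 (-t) 0 1 * A * mx2 1 t 0 1 = A.
Proof.
split; first by rewrite mx2_mul mx2_one; congr mx2; ring.
split; first by rewrite mx2_mul mx2_one; congr mx2; ring.
by rewrite !mx2_mul; congr mx2; ring.
Qed.

Lemma final_eq (a b c d : C) : a * d - b * c = 1 -> c != 0 ->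
  mx2 1 (- (a / c)) 0 1 * mx2 1 0 (c ^+ 2) 1 * mx2 1 (a / c) 0 1
  = D * (mx2 a b c d * A * invmx (mx2 a b c d)) * D.
Proof.
move=> H c0.
rewrite mx2_inv // !mx2_mul; congr mx2.
- by apply: (eq_mod _ _ (-1) _ H); field.
- by field.
- by field.
- by apply: (eq_mod _ _ (-1) _ H); field.
Qed.

End Tk.

Theorem corollary1 (R : realType) (ms : seq int) (p : {poly R[i]}) (z : R[i]) :
  good_word ms -> is_word_poly ms p -> z != 0 ->
  discrete_Gamma z -> discrete_Gamma p.[z].
Proof.
move=> _ Hp z0 Hd.
set c := sqrtc z.
have hz : c ^+ 2 = z by apply: sqr_sqrtc.
have c0 : c != 0.
  by apply: contra z0 => /eqP c0; rewrite -hz c0 expr0n.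
have [phiE [Qphi gphi]] := @phi_props R c c0.
rewrite hz in Qphi gphi.
set phi := mx2 0 (- c^-1) c 0 in phiE Qphi gphi.
have [dg Qg] := @Qn_word R _ _ ms Qphi.
set g := word_eval _ phi ms in dg Qg.
have py : p.[z] = (g 1 0) ^+ 2.
  by rewrite -gphi -Hp ?gammaA //; apply: A_parabolic.
case: (eqVneq (g 1 0) 0) => E.
- have [tMN [tNM tA]] := @trans_props R 0.
  apply: (@disc_transfer R _ _ 0) Hd.
  move=> h; apply: conj_Gamma => //; first by rewrite tA; constructor.
  by rewrite py E expr0n /= oppr0 -!mx2_one !mulr1; constructor.
- have [tMN [tNM tA]] := @trans_props R (g 0 0 / g 1 0).
  apply: (@disc_transfer R _ _ (g 0 0 / g 1 0)) Hd.
  move=> h; apply: conj_Gamma => //; first by rewrite tA; constructor.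
  rewrite py.
  have H : g 0 0 * g 1 1 - g 0 1 * g 1 0 = 1 by rewrite -mx2_det -mx2_eta.
  have FE := @final_eq R (g 0 0) (g 0 1) (g 1 0) (g 1 1) H E.
  rewrite -(@mx2_eta R g) in FE; rewrite FE.
  by apply: D_conj; apply: Qg; constructor.
Qed.
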